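(* Let $G\le \mathrm{Homeo}_+(\mathbb{R})$ and let $U\subseteq\mathbb{R}$ be a $G$-invariant set. Then the restricted action $G|_U$ (on the ordered set $U$) is non-Conradian if and only if there exists a two-chain $\{J_1,J_2\}$ with $(J_1\cup J_2)\cap U\neq\varnothing$ such that for each $i=1,2$, $J_i$ is a connected component of $\operatorname{supp} g_i$ for some $g_i\in G$.
   Context: For $g\in\mathrm{Homeo}_+(\mathbb{R})$, $\operatorname{supp} g=\mathbb{R}\setminus \mathrm{Fix}(g)$. A pair of open intervals $\{J_1,J_2\}$ in $\mathbb{R}$ is a two-chain if $J_1\cap J_2$ is a proper nonempty subinterval of both $J_1$ and $J_2$. For an ordered set $(\Omega,\le)$ and a group $G$ acting by order-preserving bijections of $\Omega$, two elements $f,g\in G$ are crossed if there exist $u<w<v$ in $\Omega$ such that (1) $g^n(u)<w<f^n(v)$ for all $n\in\mathbb{Z}$, and (2) there is $N\in\mathbb{Z}$ with $g^N(v)<w<f^N(u)$. The action is Conradian if there are no crossed elements. *)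

(* Defs.v *)
From HB Require Import structures.
From Stdlib Require Import ClassicalEpsilon.
From mathcomp Require Import all_boot all_order all_algebra.
From mathcomp Require Import all_classical all_reals all_analysis.
Set Implicit Arguments. Unset Strict Implicit. Unset Printing Implicit Defensive.
Import Order.TTheory GRing.Theory Num.Theory.
Import numFieldNormedType.Exports.
Local Open Scope classical_set_scope.
Local Open Scope ring_scope.

Section Defs.
Variable R : realType.

Definition homeo_plus (f : R -> R) : Prop :=
  continuous f /\ bijective f /\ (forall x y, x < y -> f x < f y).

Definition homeo_subgroup (G : set (R -> R)) : Prop :=
  (forall f, G f -> homeo_plus f) /\
  G id /\
  (forall f g, G f -> G g -> G (f \o g)) /\
  (forall f, G f -> exists h, G h /\ cancel f h /\ cancel h f).

Definition G_invariant (G : set (R -> R)) (U : set R) : Prop :=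
  forall g, G g -> g @` U = U.

Definition finv (f : R -> R) : R -> R :=
  epsilon (inhabits (@id R)) (fun h => cancel f h /\ cancel h f).

Definition zpow (f : R -> R) (n : int) : R -> R :=
  match n with
  | Posz k => iter k f
  | Negz k => iter k.+1 (finv f)
  end.

(* f, g crossed for the action on the ordered set U (U assumed invariant,
   so the restricted maps are the restrictions of f, g and their powers). *)
Definition crossed_on (U : set R) (f g : R -> R) : Prop :=
  exists u w v, [/\ U u, U w, U v, u < w & w < v] /\
    (forall n : int, zpow g n u < w /\ w < zpow f n v) /\
    (exists N : int, zpow g N v < w /\ w < zpow f N u).

Definition conradian_on (G : set (R -> R)) (U : set R) : Prop :=
  ~ (exists f g, G f /\ G g /\ crossed_on U f g).

Definition supp (g : R -> R) : set R := [set x | g x != x].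

Definition open_interval (J : set R) : Prop :=
  exists a b : \bar R, J = [set x | (a < x%:E)%E /\ (x%:E < b)%E].

Definition two_chain (J1 J2 : set R) : Prop :=
  [/\ open_interval J1, open_interval J2,
      J1 `&` J2 !=set0, J1 `&` J2 `<` J1 & J1 `&` J2 `<` J2].

Definition component_of_supp (J : set R) (g : R -> R) : Prop :=
  exists x, supp g x /\ J = connected_component (supp g) x.

End Defs.

(* Main.v *)
Require Import Defs.
From HB Require Import structures.
From Stdlib Require Import ClassicalEpsilon.
From mathcomp Require Import all_boot all_order all_algebra.
From mathcomp Require Import all_classical all_reals all_analysis.
Set Implicit Arguments. Unset Strict Implicit. Unset Printing Implicit Defensive.
Import Order.TTheory GRing.Theory Num.Theory.
Import numFieldNormedType.Exports.

Section Aux.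
Local Open Scope classical_set_scope.
Local Open Scope ring_scope.
Variable R : realType.
Variable G : set (R -> R).
Hypothesis HG : homeo_subgroup G.

Lemma G_homeo f : G f -> homeo_plus f.
Proof. by case: HG => H _; apply: H. Qed.

Lemma G_inc f x y : G f -> x < y -> f x < f y.
Proof. by move=> /G_homeo [_ [_ H]]; apply: H. Qed.

Lemma G_le f x y : G f -> x <= y -> f x <= f y.
Proof.
move=> Gf; rewrite le_eqVlt => /orP[/eqP->//|/(G_inc Gf)/ltW//].
Qed.

Lemma G_cont f : G f -> continuous f.
Proof. by move=> /G_homeo []. Qed.

Lemma finv_spec f : G f -> cancel f (Defs.finv f) /\ cancel (Defs.finv f) f.
Proof.
move=> Gf; case: HG => _ [_ [_ Hinv]].
have [h [_ [c1 c2]]] := Hinv f Gf.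
rewrite /Defs.finv; apply: (epsilon_spec (inhabits (@id R)) (fun h => cancel f h /\ cancel h f)).
by exists h.
Qed.

Lemma finv_G f : G f -> G (Defs.finv f).
Proof.
move=> Gf; case: HG => _ [_ [_ Hinv]].
have [h [Gh [c1 c2]]] := Hinv f Gf.
have [d1 d2] := finv_spec Gf.
suff -> : Defs.finv f = h by [].
by apply: funext => x; rewrite -{1}(c2 x) d1.
Qed.

Lemma iter_G f k : G f -> G (iter k f).
Proof.
move=> Gf; case: HG => _ [Gid [Gcomp _]].
elim: k => [|k IH] //=.
exact: (Gcomp _ _ Gf IH).
Qed.

Lemma zpow_G f n : G f -> G (zpow f n).
Proof.
move=> Gf; case: n => k /=; first exact: iter_G.
exact/iter_G/finv_G.
Qed.

Lemma iter_fix (f : R -> R) k (x : R) : f x = x -> iter k f x = x.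
Proof. by move=> fx; elim: k => //= k ->. Qed.

Lemma zpow_fix f n x : G f -> f x = x -> zpow f n x = x.
Proof.
move=> Gf fx; case: n => k; first exact: iter_fix.
apply: (@iter_fix (Defs.finv f) k.+1 x); have [c1 _] := finv_spec Gf.
by rewrite -{1}fx c1.
Qed.

Lemma zpow_inc f n x y : G f -> x < y -> zpow f n x < zpow f n y.
Proof. by move=> Gf; apply: G_inc; apply: zpow_G. Qed.

Lemma zpow_le f n x y : G f -> x <= y -> zpow f n x <= zpow f n y.
Proof. by move=> Gf; apply: G_le; apply: zpow_G. Qed.


Lemma monofix_up (k : R -> R) (y z : R) : continuous k ->
  (forall a b, a <= b -> k a <= k b) -> y <= k y ->
  (forall m, iter m k y <= z) -> exists L, [/\ y <= L, L <= z & k L = L].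
Proof.
move=> kc km yk hz.
pose s := fun m => iter m k y.
have nd : nondecreasing_seq s.
  apply/nondecreasing_seqP => m; rewrite /s /=.
  by elim: m => [|m IH] //=; apply: km.
have ub : has_ubound (range s) by exists z => _ [m _ <-]; apply: hz.
have cv := nondecreasing_cvgn nd ub.
set L := sup (range s) in cv.
have h1 : (k \o s) @ \oo --> k L.
  by apply: continuous_cvg; [exact: kc|exact: cv].
have h2 : (k \o s) @ \oo --> L.
  by move: cv; rewrite -(cvg_shiftS s).
exists L; split.
- by apply: (ub_le_sup ub); exists 0%N.
- by apply: ge_sup; [exists y, 0%N | move=> _ [m _ <-]; apply: hz].
- exact: (cvg_unique (@Rhausdorff R) h1 h2).
Qed.

Lemma monofix_down (k : R -> R) (y z : R) : continuous k ->
  (forall a b, a <= b -> k a <= k b) -> k y <= y ->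
  (forall m, z <= iter m k y) -> exists L, [/\ z <= L, L <= y & k L = L].
Proof.
move=> kc km yk hz.
pose k' := fun x => - k (- x).
have k'c : continuous k'.
  move=> x; apply: continuousN; apply: continuous_comp; first exact: continuousN.
  exact: kc.
have k'm : forall a b, a <= b -> k' a <= k' b.
  by move=> a b ab; rewrite /k' lerN2; apply: km; rewrite lerN2.
have it : forall m, iter m k' (- y) = - iter m k y.
  by elim=> [|m IH] //=; rewrite IH /k' opprK.
have s1 : - y <= k' (- y) by rewrite /k' opprK lerN2.
have s2 : forall m, iter m k' (- y) <= - z by move=> m; rewrite it lerN2.
have [L [h1 h2 h3]] := monofix_up k'c k'm s1 s2.
exists (- L); split; first by rewrite lerNr.
  + by rewrite lerNl.
  + by rewrite -{2}h3 /k' opprK.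
Qed.


Lemma escape_up h y z : G h -> y <= z ->
  (forall t, y <= t <= z -> h t != t) -> exists n : int, z < zpow h n y.
Proof.
move=> Gh yz hs; apply: contrapT => Hn.
have Hle : forall n : int, zpow h n y <= z.
  by move=> n; rewrite leNgt; apply/negP => c; apply: Hn; exists n.
have hy : h y != y by apply: hs; rewrite lexx yz.
have [c1 c2] := finv_spec Gh.
have Gk := finv_G Gh.
case: (ltgtP (h y) y) => [hlt|hgt|heq]; last by rewrite heq eqxx in hy.
- have ky : y <= Defs.finv h y.
    rewrite leNgt; apply/negP => c; have := G_inc Gh c; rewrite c2 => c'.
    by have := lt_trans c' hlt; rewrite ltxx.
  have hb : forall m, iter m (Defs.finv h) y <= z.
    by case=> [|m]; [exact: yz | exact: (Hle (Negz m))].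
  have [L [yL Lz kL]] := monofix_up (G_cont Gk) (fun a b => G_le Gk) ky hb.
  have hL : h L = L by rewrite -{1}kL c2.
  by have := hs L; rewrite yL Lz hL eqxx => /(_ isT).
- have hb : forall m, iter m h y <= z by move=> m; exact: (Hle (Posz m)).
  have [L [yL Lz kL]] := monofix_up (G_cont Gh) (fun a b => G_le Gh) (ltW hgt) hb.
  by have := hs L; rewrite yL Lz kL eqxx => /(_ isT).
Qed.

Lemma escape_down h y z : G h -> y <= z ->
  (forall t, y <= t <= z -> h t != t) -> exists n : int, zpow h n z < y.
Proof.
move=> Gh yz hs; apply: contrapT => Hn.
have Hle : forall n : int, y <= zpow h n z.
  by move=> n; rewrite leNgt; apply/negP => c; apply: Hn; exists n.
have hz : h z != z by apply: hs; rewrite lexx yz.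
have [c1 c2] := finv_spec Gh.
have Gk := finv_G Gh.
case: (ltgtP (h z) z) => [hlt|hgt|heq]; last by rewrite heq eqxx in hz.
- have hb : forall m, y <= iter m h z by move=> m; exact: (Hle (Posz m)).
  have [L [yL Lz kL]] := monofix_down (G_cont Gh) (fun a b => G_le Gh) (ltW hlt) hb.
  by have := hs L; rewrite yL Lz kL eqxx => /(_ isT).
- have ky : Defs.finv h z <= z.
    rewrite leNgt; apply/negP => c; have := G_inc Gh c; rewrite c2 => c'.
    by have := lt_trans c' hgt; rewrite ltxx.
  have hb : forall m, y <= iter m (Defs.finv h) z.
    by case=> [|m]; [exact: yz | exact: (Hle (Negz m))].
  have [L [yL Lz kL]] := monofix_down (G_cont Gk) (fun a b => G_le Gk) ky hb.
  have hL : h L = L by rewrite -{1}kL c2.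
  by have := hs L; rewrite yL Lz hL eqxx => /(_ isT).
Qed.


Lemma orbit_seg_up h n x t : G h -> h x != x ->
  x <= t <= zpow h n x -> h t != t.
Proof.
move=> Gh hx /andP[xt tz]; apply/eqP => ht.
have zt := zpow_fix n Gh ht.
move: xt; rewrite le_eqVlt => /orP[/eqP xt|xt]; first by move: hx; rewrite xt ht eqxx.
have := zpow_inc n Gh xt; rewrite zt => c.
by have := le_lt_trans tz c; rewrite ltxx.
Qed.

Lemma orbit_seg_down h n x t : G h -> h x != x ->
  zpow h n x <= t <= x -> h t != t.
Proof.
move=> Gh hx /andP[tz xt]; apply/eqP => ht.
have zt := zpow_fix n Gh ht.
move: xt; rewrite le_eqVlt => /orP[/eqP xt|xt]; first by move: hx; rewrite -xt ht eqxx.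
have := zpow_inc n Gh xt; rewrite zt => c.
by have := lt_le_trans c tz; rewrite ltxx.
Qed.

Lemma comp_itv (A : set R) x a b t : connected_component A x a ->
  connected_component A x b -> a <= t <= b -> connected_component A x t.
Proof.
move=> ha hb hab; have := @component_connected _ A x.
move=> /connected_intervalP H; exact: (H a b ha hb t hab).
Qed.

Lemma seg_comp_up (A : set R) x y : x <= y ->
  (forall t, x <= t <= y -> A t) -> connected_component A x y.
Proof.
move=> xy hA.
apply: (connected_component_max (B := `[x, y]%classic)).
- by rewrite /= in_itv /= lexx xy.
- by move=> t /=; rewrite in_itv /=; apply: hA.
- exact: segment_connected.
- by rewrite /= in_itv /= lexx xy.
Qed.

Lemma seg_comp_down (A : set R) x y : y <= x ->
  (forall t, y <= t <= x -> A t) -> connected_component A x y.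
Proof.
move=> xy hA.
apply: (connected_component_max (B := `[y, x]%classic)).
- by rewrite /= in_itv /= lexx xy.
- by move=> t /=; rewrite in_itv /=; apply: hA.
- exact: segment_connected.
- by rewrite /= in_itv /= lexx xy.
Qed.


Lemma supp_nbhs (h : R -> R) (y : R) : continuous h -> supp h y ->
  exists2 e, 0 < e & forall z, `|z - y| < e -> supp h z.
Proof.
move=> hc hy.
have d0 : 0 < `|h y - y| by rewrite normr_gt0 subr_eq0.
set d := `|h y - y| in d0.
have := hc y; move/cvgrPdist_lt => /(_ (d / 2)).
rewrite divr_gt0 // => /(_ isT) /nbhs_ballP [e e0 He].
exists (Num.min e (d / 2)); first by rewrite lt_min e0 divr_gt0.
move=> z; rewrite lt_min => /andP[ze zd].
have : ball y e z by rewrite -ball_normE /ball_ /= distrC.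
move/He => /= hz; rewrite /supp /=; apply/negP => /eqP hzz.
have : d < d.
  rewrite {1}/d (_ : h y - y = (h y - h z) + (z - y)); last by rewrite hzz addrA subrK.
  apply: (le_lt_trans (ler_normD _ _)).
  by rewrite [X in _ < X](splitr d); apply: ltrD.
by rewrite ltxx.
Qed.

Lemma comp_open (h : R -> R) (x : R) : continuous h -> supp h x ->
  open_interval (connected_component (supp h) x).
Proof.
move=> hc hx; set C := connected_component (supp h) x.
exists (ereal_inf [set t%:E | t in C]), (ereal_sup [set t%:E | t in C]).
apply/seteqP; split => t /=.
- move=> Ct.
  have st : supp h t by apply: connected_component_sub Ct.
  have [e e0 He] := supp_nbhs hc st.
  have e20 : 0 < e / 2 by rewrite divr_gt0.
  have e2e : e / 2 < e by rewrite ltr_pdivrMr // ltr_pMr // ltr1n.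
  split.
  + apply: (@le_lt_trans _ _ (t - e / 2)%:E).
      apply: ereal_inf_lbound; exists (t - e / 2) => //.
      apply: (connected_component_trans Ct); apply: seg_comp_down.
        by rewrite lerBlDr lerDl ltW.
      move=> u /andP[u1 u2]; apply: He.
      rewrite ler0_norm ?subr_le0 // opprB.
      by apply: (le_lt_trans _ e2e); rewrite lerBlDr addrC -lerBlDr.
    by rewrite lte_fin ltrBlDr ltrDl.
  + apply: (@lt_le_trans _ _ (t + e / 2)%:E); first by rewrite lte_fin ltrDl.
    apply: ereal_sup_ubound; exists (t + e / 2) => //.
    apply: (connected_component_trans Ct); apply: seg_comp_up.
      by rewrite lerDl ltW.
    move=> u /andP[u1 u2]; apply: He.
    rewrite ger0_norm ?subr_ge0 //.
    by apply: (le_lt_trans _ e2e); rewrite lerBlDl.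
- move=> [] /ereal_inf_lt [_ [s Cs <-]] st /ereal_sup_gt [_ [s' Cs' <-]] ts.
  rewrite lte_fin in st; rewrite lte_fin in ts.
  by apply: (comp_itv Cs Cs'); rewrite !ltW.
Qed.

Lemma G_inv_mem (U : set R) k x : G_invariant G U -> G k -> U x -> U (k x).
Proof. by move=> HU Gk Ux; rewrite -(HU k Gk); exists x. Qed.


Lemma forward (U : set R) f g : G f -> G g -> crossed_on U f g ->
   exists (J1 J2 : set R) (g1 g2 : R -> R),
     [/\ two_chain J1 J2, (J1 `|` J2) `&` U !=set0,
         G g1 /\ component_of_supp J1 g1 & G g2 /\ component_of_supp J2 g2].
Proof.
move=> Gf Gg [u [w [v [[Uu Uw Uv uw wv] [H1 [N [HN1 HN2]]]]]]].
set J1 := connected_component (supp f) u.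
set J2 := connected_component (supp g) v.
have fu : supp f u.
  rewrite /supp /=; apply/eqP => fu; move: HN2; rewrite (zpow_fix N Gf fu) => c.
  by have := lt_trans uw c; rewrite ltxx.
have gv : supp g v.
  rewrite /supp /=; apply/eqP => gv; move: HN1; rewrite (zpow_fix N Gg gv) => c.
  by have := lt_trans wv c; rewrite ltxx.
have J1w : J1 w.
  apply: seg_comp_up (ltW uw) _ => t /andP[ut tw]; rewrite /supp /=; apply/eqP => ft.
  have := zpow_le N Gf ut; rewrite (zpow_fix N Gf ft) => c.
  by have := lt_le_trans HN2 (le_trans c tw); rewrite ltxx.
have J2w : J2 w.
  apply: seg_comp_down (ltW wv) _ => t /andP[wt tv]; rewrite /supp /=; apply/eqP => ft.
  have := zpow_le N Gg tv; rewrite (zpow_fix N Gg ft) => c.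
  by have := le_lt_trans (le_trans wt c) HN1; rewrite ltxx.
have J1u : J1 u by apply: connected_component_refl.
have J2v : J2 v by apply: connected_component_refl.
have nJ2u : ~ J2 u.
  move=> J2u; have [n hn] : exists n : int, w < zpow g n u.
    apply: escape_up Gg (ltW uw) _ => t tI.
    exact: (connected_component_sub (comp_itv J2u J2w tI)).
  by have := (H1 n).1; rewrite ltNge (ltW hn).
have nJ1v : ~ J1 v.
  move=> J1v; have [n hn] : exists n : int, zpow f n v < w.
    apply: escape_down Gf (ltW wv) _ => t tI.
    exact: (connected_component_sub (comp_itv J1w J1v tI)).
  by have := (H1 n).2; rewrite ltNge (ltW hn).
exists J1, J2, f, g; split.
- split.
  + exact: comp_open (G_cont Gf) fu.
  + exact: comp_open (G_cont Gg) gv.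
  + by exists w.
  + by split => [t []//|H]; apply: nJ2u; have [] := H u J1u.
  + by split => [t []//|H]; apply: nJ1v; have [] := H v J2v.
- by exists u; split => //; left.
- by split => //; exists u.
- by split => //; exists v.
Qed.


Lemma back_core (U : set R) g1 g2 x1 x2 q y1 y2 p :
  G_invariant G U -> G g1 -> G g2 ->
  connected_component (supp g1) x1 q -> connected_component (supp g2) x2 q ->
  connected_component (supp g1) x1 y1 -> ~ connected_component (supp g2) x2 y1 ->
  connected_component (supp g2) x2 y2 -> ~ connected_component (supp g1) x1 y2 ->
  y1 < q -> q < y2 -> U p ->
  connected_component (supp g1) x1 p \/ connected_component (supp g2) x2 p ->
  exists f g, G f /\ G g /\ crossed_on U f g.
Proof.
set J1 := connected_component (supp g1) x1.
set J2 := connected_component (supp g2) x2.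
move=> HU Gg1 Gg2 J1q J2q J1y1 nJ2y1 J2y2 nJ1y2 y1q qy2 Up Jp.
have s1 : forall t, J1 t -> g1 t != t by move=> t /connected_component_sub.
have s2 : forall t, J2 t -> g2 t != t by move=> t /connected_component_sub.
have [c [y1c cq gc]] : exists c, [/\ y1 <= c, c <= q & g2 c = c].
  apply: contrapT => Hn; apply: nJ2y1; apply: (connected_component_trans J2q).
  apply: seg_comp_down (ltW y1q) _ => t /andP[t1 t2]; rewrite /supp /=.
  by apply/eqP => e; apply: Hn; exists t; split.
have [b [qb' by2 gb]] : exists b, [/\ q <= b, b <= y2 & g1 b = b].
  apply: contrapT => Hn; apply: nJ1y2; apply: (connected_component_trans J1q).
  apply: seg_comp_up (ltW qy2) _ => t /andP[t1 t2]; rewrite /supp /=.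
  by apply/eqP => e; apply: Hn; exists t; split.
have J2gt : forall t, J2 t -> c < t.
  move=> t J2t; rewrite ltNge; apply/negP => tc.
  have J2c : J2 c by apply: (comp_itv J2t J2q); rewrite tc cq.
  by have := s2 c J2c; rewrite gc eqxx.
have J1lt : forall t, J1 t -> t < b.
  move=> t J1t; rewrite ltNge; apply/negP => bt.
  have J1b : J1 b by apply: (comp_itv J1q J1t); rewrite bt qb'.
  by have := s1 b J1b; rewrite gb eqxx.
have J1c : J1 c by apply: (comp_itv J1y1 J1q); rewrite y1c cq.
have J2b : J2 b by apply: (comp_itv J2q J2y2); rewrite qb' by2.
have J1mid : forall t, c <= t <= q -> J1 t by move=> t; apply: comp_itv J1c J1q.
have J2mid : forall t, q <= t <= b -> J2 t by move=> t; apply: comp_itv J2q J2b.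
have [w [Uw J1w J2w]] : exists w, [/\ U w, J1 w & J2 w].
  case: Jp => [J1p|J2p].
  - case: (pselect (J2 p)) => [J2p|nJ2p]; first by exists p.
    have pq : p < q.
      rewrite ltNge; apply/negP => qp; apply: nJ2p; apply: J2mid.
      by rewrite qp ltW // J1lt.
    have [n hn] := escape_up Gg1 (ltW pq)
      (fun t ht => connected_component_sub (comp_itv J1p J1q ht)).
    exists (zpow g1 n p); split.
    + exact: (G_inv_mem HU (zpow_G n Gg1) Up).
    + apply: (connected_component_trans J1p); apply: seg_comp_up.
        exact: ltW (lt_trans pq hn).
      by move=> t ht; apply: (orbit_seg_up Gg1 (s1 p J1p) ht).
    + apply: J2mid; rewrite (ltW hn) /=.
      have := zpow_inc n Gg1 (J1lt p J1p); rewrite (zpow_fix n Gg1 gb).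
      exact: ltW.
  - case: (pselect (J1 p)) => [J1p|nJ1p]; first by exists p.
    have qp : q < p.
      rewrite ltNge; apply/negP => pq; apply: nJ1p; apply: J1mid.
      by rewrite pq ltW // J2gt.
    have [n hn] := escape_down Gg2 (ltW qp)
      (fun t ht => connected_component_sub (comp_itv J2q J2p ht)).
    exists (zpow g2 n p); split.
    + exact: (G_inv_mem HU (zpow_G n Gg2) Up).
    + apply: J1mid; rewrite (ltW hn) andbT.
      have := zpow_inc n Gg2 (J2gt p J2p); rewrite (zpow_fix n Gg2 gc).
      exact: ltW.
    + apply: (connected_component_trans J2p); apply: seg_comp_down.
        exact: ltW (lt_trans hn qp).
      by move=> t ht; apply: (orbit_seg_down Gg2 (s2 p J2p) ht).
have cw := J2gt w J2w.
have wb := J1lt w J1w.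
have [n hu] := escape_down Gg1 (ltW cw)
  (fun t ht => connected_component_sub (comp_itv J1c J1w ht)).
set u := zpow g1 n w in hu.
have segu : forall t, u <= t <= w -> g1 t != t.
  by move=> t ht; apply: (orbit_seg_down Gg1 (s1 w J1w) ht).
have [m hv] := escape_up Gg2 (ltW wb)
  (fun t ht => connected_component_sub (comp_itv J2w J2b ht)).
set v := zpow g2 m w in hv.
have segv : forall t, w <= t <= v -> g2 t != t.
  by move=> t ht; apply: (orbit_seg_up Gg2 (s2 w J2w) ht).
have uw : u < w := lt_trans hu cw.
have wv : w < v := lt_trans wb hv.
have [n1 hn1] := escape_up Gg1 (ltW uw) segu.
have [m1 hm1] := escape_down Gg2 (ltW wv) segv.
have Gf := zpow_G n1 Gg1.
have Gg := zpow_G m1 Gg2.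
exists (zpow g1 n1), (zpow g2 m1); split => //; split => //.
exists u, w, v; split; last split.
- split => //.
  + exact: (G_inv_mem HU (zpow_G n Gg1) Uw).
  + exact: (G_inv_mem HU (zpow_G m Gg2) Uw).
- move=> k; split.
  + have gc' := zpow_fix m1 Gg2 gc.
    have := zpow_inc k Gg hu; rewrite (zpow_fix k Gg gc') => h.
    exact: lt_trans h cw.
  + have gb' := zpow_fix n1 Gg1 gb.
    have := zpow_inc k Gf hv; rewrite (zpow_fix k Gf gb') => h.
    exact: lt_trans wb h.
- by exists (Posz 1); split.
Qed.

End Aux.

Unset Implicit Arguments.
Local Open Scope classical_set_scope.

Theorem lemma2p5 (R : realType) (G : set (R -> R)) (U : set R) :
  homeo_subgroup G -> G_invariant G U ->
  (~ conradian_on G U <->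
   exists (J1 J2 : set R) (g1 g2 : R -> R),
     [/\ two_chain J1 J2, (J1 `|` J2) `&` U !=set0,
         G g1 /\ component_of_supp J1 g1 & G g2 /\ component_of_supp J2 g2]).
Proof.
move=> HG HU; split.
- move=> nC; have [f [g [Gf [Gg Hc]]]] := contrapT nC.
  exact: (forward HG Gf Gg Hc).
- move=> [J1 [J2 [g1 [g2 [[oi1 oi2 [q [J1q J2q]] [_ P1] [_ P2]]
    [p [Jp Up]] [Gg1 [x1 [sx1 E1]]] [Gg2 [x2 [sx2 E2]]]]]]]] nC; apply: nC.
  subst J1 J2.
  set J1 := connected_component (supp g1) x1 in J1q P1 P2 Jp *.
  set J2 := connected_component (supp g2) x2 in J2q P1 P2 Jp *.
  have [y1 [J1y1 nJ2y1]] : exists y1, J1 y1 /\ ~ J2 y1.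
    apply: contrapT => H; apply: P1 => t J1t; split => //.
    by apply: contrapT => nt; apply: H; exists t.
  have [y2 [J2y2 nJ1y2]] : exists y2, J2 y2 /\ ~ J1 y2.
    apply: contrapT => H; apply: P2 => t J2t; split => //.
    by apply: contrapT => nt; apply: H; exists t.
  case: (ltgtP y1 q) => [y1q|qy1|e]; last by exfalso; apply: nJ2y1; rewrite e.
  + have qy2 : (q < y2)%R.
      case: (ltgtP q y2) => [//|y2q|e]; last by exfalso; apply: nJ1y2; rewrite -e.
      exfalso; case: (leP y1 y2) => y12.
      * by apply: nJ1y2; apply: (comp_itv J1y1 J1q); rewrite y12 ltW.
      * by apply: nJ2y1; apply: (comp_itv J2y2 J2q); rewrite ltW // ltW.
    exact: (back_core HG HU Gg1 Gg2 J1q J2q J1y1 nJ2y1 J2y2 nJ1y2 y1q qy2 Up Jp).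
  + have y2q : (y2 < q)%R.
      case: (ltgtP y2 q) => [//|qy2|e]; last by exfalso; apply: nJ1y2; rewrite e.
      exfalso; case: (leP y1 y2) => y12.
      * by apply: nJ2y1; apply: (comp_itv J2q J2y2); rewrite y12 ltW.
      * by apply: nJ1y2; apply: (comp_itv J1q J1y1); rewrite ltW // ltW.
    have Jp' : J2 p \/ J1 p by case: Jp; [right|left].
    exact: (back_core HG HU Gg2 Gg1 J2q J1q J2y2 nJ1y2 J1y1 nJ2y1 y2q qy1 Up Jp').
Qed.
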